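(* Suppose that for every binary system $(S,\star)$ and every nonempty compact convex subset $C\subseteq\Pr(S)$ closed under $\star$ there is $\mu\in C$ with $\mu\star\mu=\mu$. Then: for every $c:\mathbb{T}\to[0,1]$ and $\epsilon>0$ there exist $r\in[0,1]$ and an increasing sequence $\mu_i$ ($i\in\omega$) of elements of $\mathbb{A}$ such that whenever $t\in\mathbb{T}_m$ and $i_0<\dots<i_{m-1}$ (natural numbers) is admissible for $t$, we have $|c(t(\mu_{i_0},\dots,\mu_{i_{m-1}}))-r|<\epsilon$.
   Context: For a set $S$, $\Pr(S)$ is the set of finitely additive probability measures on $S$, identified with positive linear functionals $f$ on $\ell^\infty(S)$ with $f(\bar1)=1$, with the weak* topology. For a binary operation $\star$ on $S$ and $\mu,\nu\in\Pr(S)$, $(\mu\star\nu)(f)=\int\int f(x\star y)\,d\nu(y)\,d\mu(x)$. For $a,b\subseteq(0,1]$ put $a\,\hat{}\,b=\tfrac12 a\cup\tfrac12(b+1)$; $\mathbb{T}$ is the set generated from $\mathbf{1}=\{1\}$ by $\hat{}$ (free binary system on one generator; each $t\neq\mathbf1$ is uniquely $a\,\hat{}\,b$). $\#(t)$ is the cardinality of $t$, $\mathbb{T}_n=\{t:\#(t)=n\}$, $\mathbb{A}_n$ is the set of probability measures on $\mathbb{T}_n$, $\mathbb{A}$ the disjoint union of the $\mathbb{A}_n$, $\#(\nu)=n$ for $\nu\in\mathbb{A}_n$; a sequence $\mu_i$ in $\mathbb{A}$ is increasing if $i<j$ implies $\#(\mu_i)<\#(\mu_j)$. $c$ is extended linearly: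 $c(\nu)=\sum_t\nu(\{t\})c(t)$. Substitution: for $t\in\mathbb{T}_m$ and $u_0,\dots,u_{m-1}\in\mathbb{T}$, $\mathbf1(u_0)=u_0$ and $(a\,\hat{}\,b)(u_0,\dots,u_{m-1})=a(u_0,\dots,u_{p-1})\,\hat{}\,b(u_p,\dots,u_{m-1})$ with $p=\#(a)$ (i.e. $u_i$ replaces the $i$-th occurrence of $\mathbf1$ in the term $t$); this extends $m$-multilinearly to a map $\mathbb{A}^m\to\mathbb{A}$. For $t\in\mathbb{T}$ and $k<\#(t)$ define $t_k$ recursively: $t_k=\mathbf1$ if $t=\mathbf1$, $k=0$; $t_k=a_k\,\hat{}\,\mathbf1$ if $t=a\,\hat{}\,b$ and $k<\#(a)$; $t_k=a\,\hat{}\,b_{k-\#(a)}$ if $t=a\,\hat{}\,b$ and $\#(a)\le k<\#(t)$. Let $l_k(t)=\#(t_k)-2$. For $t\in\mathbb{T}_m$, an increasing sequence $i_0<\dots<i_{m-1}$ is admissible for $t$ if $l_k(t)\le i_k$ for all $k<m$. *)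

(* Defs.v *)
From HB Require Import structures.
From mathcomp Require Import all_boot all_order all_algebra.
From mathcomp Require Import all_classical all_reals all_analysis.
Set Implicit Arguments. Unset Strict Implicit. Unset Printing Implicit Defensive.
Import Order.TTheory GRing.Theory Num.Theory.
Import numFieldTopology.Exports numFieldNormedType.Exports.
Local Open Scope classical_set_scope.
Local Open Scope ring_scope.

Section Pr.
Variable R : realType.
Variable S : Type.

Definition bnd (f : S -> R) : Prop := exists M : R, forall x, `|f x| <= M.

(* Pr(S): positive linear functionals on l^oo(S) with value 1 at the constant
   function 1.  A functional is represented as a map (S -> R) -> R that is
   (by convention) 0 on unbounded functions, so that the weak* topology is
   the subspace topology of the product (pointwise) topology on
   (S -> R) -> R. *)
Definition is_prob (mu : (S -> R) -> R) : Prop :=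
  [/\ (forall f, ~ bnd f -> mu f = 0),
      (forall (a : R) f g, bnd f -> bnd g ->
          mu (fun x => a * f x + g x) = a * mu f + mu g),
      (forall f, bnd f -> (forall x, 0 <= f x) -> 0 <= mu f)
    & mu (fun _ => 1) = 1].

Definition bconv (op : S -> S -> S) (mu nu : (S -> R) -> R) : (S -> R) -> R :=
  fun f => if `[< bnd f >] then mu (fun x => nu (fun y => f (op x y))) else 0.

Definition wconvex (C : set ((S -> R) -> R)) : Prop :=
  forall mu nu (t : R), C mu -> C nu -> 0 <= t <= 1 ->
    C (fun f => t * mu f + (1 - t) * nu f).

Definition wcompact (C : set ((S -> R) -> R)) : Prop :=
  @compact (prod_topology (fun _ : S -> R => (R : topologicalType))) C.

End Pr.

Inductive tree : Type := Leaf : tree | Node : tree -> tree -> tree.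

Fixpoint tree_eqb (s t : tree) : bool :=
  match s, t with
  | Leaf, Leaf => true
  | Node a b, Node c d => tree_eqb a c && tree_eqb b d
  | _, _ => false
  end.

Lemma tree_eqP : Equality.axiom tree_eqb.
Proof.
move=> s; elim: s => [|a IHa b IHb] t; case: t => [|c d] /=; try by constructor.
case: (IHa c) => [<-|Hac]; last by constructor; case.
case: (IHb d) => [<-|Hbd]; last by constructor; case.
by constructor.
Qed.

HB.instance Definition _ := hasDecEq.Build tree tree_eqP.

Fixpoint leaves (t : tree) : nat :=
  match t with Leaf => 1%N | Node a b => (leaves a + leaves b)%N end.

Fixpoint subst (t : tree) (us : seq tree) : tree :=
  match t with
  | Leaf => head Leaf us
  | Node a b => Node (subst a (take (leaves a) us)) (subst b (drop (leaves a) us))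
  end.

Fixpoint tk (t : tree) (k : nat) : tree :=
  match t with
  | Leaf => Leaf
  | Node a b => if (k < leaves a)%N then Node (tk a k) Leaf
                else Node a (tk b (k - leaves a))
  end.

Definition lk (t : tree) (k : nat) : int := (leaves (tk t k))%:Z - 2%:Z.

Definition admissible (t : tree) (ix : seq nat) : Prop :=
  [/\ size ix = leaves t, sorted ltn ix &
      forall k, (k < leaves t)%N -> lk t k <= (nth 0%N ix k)%:Z].

Section Ameas.
Variable R : realType.

(* A finitely supported measure ix represented as a formal combination
   sum_j w_j delta_{t_j}, given by the list of pairs (t_j, w_j). *)
Definition fmeas := seq (tree * R).

Definition inA (n : nat) (nu : fmeas) : Prop :=
  [/\ forall p, p \in nu -> leaves p.1 = n,
      forall p, p \in nu -> 0 <= p.2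
    & \sum_(p <- nu) p.2 = 1].

Definition cA (c : tree -> R) (nu : fmeas) : R := \sum_(p <- nu) p.2 * c p.1.

Fixpoint choices (ls : seq fmeas) : seq (seq tree * R) :=
  match ls with
  | [::] => [:: ([::], 1)]
  | l :: ls' => [seq (u.1 :: q.1, u.2 * q.2) | u <- l, q <- choices ls']
  end.

Definition tsubst (t : tree) (ls : seq fmeas) : fmeas :=
  [seq (subst t q.1, q.2) | q <- choices ls].

End Ameas.

(* Main.v *)
Require Import Defs.
From HB Require Import structures.
From mathcomp Require Import all_boot all_order all_algebra.
From mathcomp Require Import all_classical all_reals all_analysis.
From mathcomp Require Import ring lra zify.
Import Order.TTheory GRing.Theory Num.Theory.
Import numFieldTopology.Exports numFieldNormedType.Exports.
Set Implicit Arguments. Unset Strict Implicit. Unset Printing Implicit Defensive.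
Local Open Scope classical_set_scope.

Record isF (F : set_system nat) : Prop := IsF {
  fT : F setT;
  fI : forall A B, F A -> F B -> F (A `&` B);
  fS : forall A B, A `<=` B -> F A -> F B;
  f0 : ~ F set0 }.

Definition isU (p : set_system nat) := isF p /\ forall A, p A \/ p (~` A).

Definition psum (p q : set_system nat) : set_system nat :=
  fun A => p [set n | q [set m | A (n + m)%N]].

Definition cofin (A : set nat) := exists N, forall n, (N <= n)%N -> A n.

Lemma isF_proper F : isF F -> ProperFilter F.
Proof.
case=> FT FI FS F0; apply: Build_ProperFilter => //; split => //.
Qed.

Lemma ultra_ext F : isF F -> exists p, isU p /\ F `<=` p.
Proof.
move=> /isF_proper FF; have [G [GU sFG]] := ultraFilterLemma FF.
exists G; split => //; split; last by move=> A; exact: in_ultra_setVsetC.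
have GP : ProperFilter G by case: GU.
split.
- exact: filterT.
- by move=> A B; exact: filterI.
- by move=> A B; exact: filterS.
- exact: filter_not_empty.
Qed.

Lemma isU_notC p A : isU p -> p A -> ~ p (~` A).
Proof.
move=> [[_ pI _ p0] _] pA pnA; apply: p0.
have := pI _ _ pA pnA; by rewrite setICr.
Qed.

Lemma isU_eq p q : isU p -> isU q -> p `<=` q -> p = q.
Proof.
move=> pU qU spq; apply/funext => A; apply/propext; split; first exact: spq.
move=> qA; case: (pU.2 A) => // /spq /(isU_notC qU qA) [].
Qed.

Lemma psum_isU p q : isU p -> isU q -> isU (psum p q).
Proof.
move=> [[pT pI pS p0] pU] [[qT qI qS q0] qU]; split; first split.
- by apply: pS pT => n _ /=; apply: qS qT.
- move=> A B pA pB; apply: pS (pI _ _ pA pB) => n [qA qB] /=.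
  by apply: qS (qI _ _ qA qB) => m.
- move=> A B AB pA; apply: pS pA => n /= qA; by apply: qS qA => m /AB.
- move=> pE; apply: p0; apply: pS pE => n /= H.
  by apply: q0; apply: qS H => m.
- move=> A; case: (pU [set n | q [set m | A (n + m)%N]]) => H; [left|right] => //.
  apply: pS H => n /= nq; case: (qU [set m | A (n + m)%N]) => // H2.
Qed.

Lemma psumA p q r : psum (psum p q) r = psum p (psum q r).
Proof.
apply/funext => A; rewrite /psum /=.
congr (p _); apply/funext => k; congr (q _); apply/funext => n.
congr (r _); apply/funext => m /=; by rewrite addnA.
Qed.

Definition Ext (F : set_system nat) : set (set_system nat) :=
  [set q | isU q /\ F `<=` q].

Definition Good (F : set_system nat) :=
  [/\ isF F, (forall A, cofin A -> F A) &
      (forall q r, Ext F q -> Ext F r -> F `<=` psum q r)].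

Definition cofF : set_system nat := cofin.

Lemma cofin_inter A B : cofin A -> cofin B -> cofin (A `&` B).
Proof.
move=> [N HN] [M HM]; exists (maxn N M) => n Hn; split.
  by apply: HN; apply: leq_trans Hn; apply: leq_maxl.
by apply: HM; apply: leq_trans Hn; apply: leq_maxr.
Qed.

Lemma Good_cof : Good cofF.
Proof.
split => //.
- split.
  + by exists 0%N.
  + exact: cofin_inter.
  + by move=> A B AB [N HN]; exists N => n /HN /AB.
  + by move=> [N HN]; apply: (HN N).
- move=> q r [[[qT _ qS _] _] _] [[[rT _ rS _] _] rF] A [N HN].
  rewrite /psum; apply: qS qT => n _ /=.
  apply: (rS [set m | (N <= m)%N]); last by apply: rF; exists N.
  by move=> m /= Hm; apply: HN; apply: leq_trans Hm (leq_addl _ _).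
Qed.

Lemma exists_max_Good :
  exists F, Good F /\ forall G, Good G -> F `<=` G -> G `<=` F.
Proof.
pose T := {F : set_system nat | Good F}.
pose R := fun (a b : T) => `[< sval a `<=` sval b >].
have [t tmax] : exists t : T, premaximal R t.
  apply: (ZL_preorder (exist _ cofF Good_cof)).
  - by move=> t; apply/asboolP.
  - by move=> r s t /asboolP rs /asboolP st; apply/asboolP; exact: subset_trans st.
  - move=> A Atot; have [[G AG] | A0] := pselect (A !=set0); last first.
      exists (exist _ cofF Good_cof) => G AG; exfalso; apply: A0; by exists G.
    pose U : set_system nat := fun X => exists H, A H /\ sval H X.
    have GU : Good U.
      case: (svalP G) => [[GT GI GS G0] Gc Gs].
      split.
      + split.
        * by exists G.
        * move=> X Y [H1 [A1 X1]] [H2 [A2 Y2]].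
          case: (Atot _ _ A1 A2) => /asboolP s12.
          - exists H2; split => //; case: (svalP H2) => [[_ I2 _ _] _ _].
            by apply: I2 => //; apply: s12.
          - exists H1; split => //; case: (svalP H1) => [[_ I1 _ _] _ _].
            by apply: I1 => //; apply: s12.
        * move=> X Y XY [H [AH HX]]; exists H; split => //.
          by case: (svalP H) => [[_ _ S1 _] _ _]; apply: S1 HX.
        * move=> [H [AH HX]]; by case: (svalP H) => [[_ _ _ H0] _ _]; apply: H0.
      + by move=> X /Gc GX; exists G.
      + move=> q r [qU qF] [rU rF] X [H [AH HX]].
        case: (svalP H) => [_ _ Hs]; apply: Hs => //.
        * by split => // Y HY; apply: qF; exists H.
        * by split => // Y HY; apply: rF; exists H.
    exists (exist _ U GU) => H AH; apply/asboolP => X HX /=; by exists H.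
exists (sval t); split; first exact: (svalP t).
move=> G GG tG; have := tmax (exist _ G GG).
by move=> /(_ (asboolT tG)) /asboolP.
Qed.

Definition hat (p : set_system nat) (A : set nat) := [set n | p [set m | A (n + m)%N]].

Definition Hf (F r p : set_system nat) : set_system nat :=
  fun X => exists B A, [/\ F B, r A & (B `&` hat p A) `<=` X].

Lemma Hf_isF F r p : isF F -> isF r -> isF p -> ~ Hf F r p set0 -> isF (Hf F r p).
Proof.
move=> [FT FI FS _] [rT rI rS _] [pT pI pS _] H0; split => //.
- by exists setT, setT; split.
- move=> X Y [B1 [A1 [F1 r1 s1]]] [B2 [A2 [F2 r2 s2]]].
  exists (B1 `&` B2), (A1 `&` A2); split; [exact: FI|exact: rI|].
  move=> n [[b1 b2] h]; split.
  + apply: (s1 n); split => //; apply: pS h => m [a1 a2]; exact: a1.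
  + apply: (s2 n); split => //; apply: pS h => m [a1 a2]; exact: a2.
- move=> X Y XY [B [A [FB rA s]]]; exists B, A; split => //.
  exact: subset_trans XY.
Qed.

Lemma Ext_isF F q : Ext F q -> isF q.
Proof. by case=> [[]]. Qed.

Lemma Good_isF F : Good F -> isF F.
Proof. by case. Qed.

Lemma closed_ext F p r : Good F -> Ext F p -> isU r ->
  (forall A, (forall q, Ext F q -> psum q p A) -> r A) ->
  exists2 q, Ext F q & r = psum q p.
Proof.
move=> GF Ep rU Hr.
have pU : isU p by case: Ep.
have HF : isF (Hf F r p).
  apply: Hf_isF; [exact: Good_isF|exact: rU.1|exact: pU.1|].
  move=> [B [A [FB rA sB]]].
  have : r (~` A).
    apply: Hr => q [qU qF]; rewrite /psum.
    apply: (qU.1.(fS) (A := B)); last exact: qF.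
    move=> n Bn /=; case: (pU.2 [set m | A (n + m)%N]) => h.
      by exfalso; apply: (sB n); split.
    exact: h.
  exact: isU_notC rU rA.
have [q [qU Hq]] := ultra_ext HF.
exists q.
  split => // B FB; apply: Hq; exists B, setT.
  split; [done|exact: rU.1.(fT)|by move=> n []].
apply: isU_eq => //; first exact: psum_isU.
move=> A rA; apply: Hq; exists setT, A.
split; [exact: (Good_isF GF).(fT)|done|by move=> n []].
Qed.

Lemma exists_idem :
  exists p, [/\ isU p, (forall A, cofin A -> p A) & psum p p = p].
Proof.
have [F [GF Fmax]] := exists_max_Good.
have FF := Good_isF GF.
have [p [pU Fp]] := ultra_ext FF.
have Ep : Ext F p by [].
case: GF => _ Fcof Fsg.
pose F' : set_system nat := fun A => forall q, Ext F q -> psum q p A.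
have FF' : F `<=` F' by move=> A FA q Eq; exact: Fsg.
have GF' : Good F'.
  split.
  - split.
    + by move=> q Eq; exact: (psum_isU Eq.1 pU).1.(fT).
    + move=> A B HA HB q Eq; apply: (psum_isU Eq.1 pU).1.(fI); [exact: HA|exact: HB].
    + move=> A B AB HA q Eq; apply: (psum_isU Eq.1 pU).1.(fS) AB _; exact: HA.
    + move=> H0; exact: (psum_isU pU pU).1.(f0) (H0 p Ep).
  - by move=> A /Fcof /FF'.
  - move=> r1 r2 [r1U r1F] [r2U r2F].
    have [q1 Eq1 ->] := closed_ext (And3 FF Fcof Fsg) Ep r1U r1F.
    have [q2 Eq2 ->] := closed_ext (And3 FF Fcof Fsg) Ep r2U r2F.
    have E1 : Ext F (psum q1 p) by split; [exact: psum_isU Eq1.1 pU|exact: Fsg].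
    have E2 : Ext F (psum (psum q1 p) q2).
      by split; [exact: psum_isU E1.1 Eq2.1|exact: Fsg].
    move=> A HA; rewrite -psumA; exact: HA _ E2.
have F'F := Fmax _ GF' FF'.
have [q0 Eq0 pq0] : exists2 q, Ext F q & p = psum q p.
  apply: (closed_ext (And3 FF Fcof Fsg) Ep pU).
  by move=> A HA; apply: Fp; apply: F'F => q Eq; exact: HA.
have hatq0 : forall A, p A -> q0 (hat p A).
  by move=> A pA; rewrite pq0 in pA.
have fix_of : forall q, isU q -> (forall A, p A -> q (hat p A)) -> psum q p = p.
  move=> q qU Hq; apply/esym/isU_eq => //; first exact: psum_isU.
pose F'' := Hf F p p.
have HF'' : isF F''.
  apply: (Hf_isF FF pU.1 pU.1).
  move=> [B [A [FB pA sB]]]; apply: (Ext_isF Eq0).(f0).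
  apply: (Ext_isF Eq0).(fS) sB _; apply: (Ext_isF Eq0).(fI).
  - exact: Eq0.2.
  - exact: hatq0.
have FF'' : F `<=` F''.
  move=> B FB; exists B, setT.
  split; [done|exact: pU.1.(fT)|by move=> n []].
have GF'' : Good F''.
  split => //; first by move=> A /Fcof /FF''.
  move=> q1 q2 [q1U q1F] [q2U q2F].
  have Eq1 : Ext F q1 by split => // A /FF'' /q1F.
  have Eq2 : Ext F q2 by split => // A /FF'' /q2F.
  have hq (q : set_system nat) : F'' `<=` q -> forall A, p A -> q (hat p A).
    move=> qF A pA; apply: qF; exists setT, A.
    split; [exact: FF.(fT)|done|by move=> n []].
  have fq1 := fix_of _ q1U (hq _ q1F).
  have fq2 := fix_of _ q2U (hq _ q2F).
  have f12 : psum (psum q1 q2) p = p by rewrite psumA fq2 fq1.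
  have E12 : Ext F (psum q1 q2) by split; [exact: psum_isU|exact: Fsg].
  move=> X [B [A [FB pA sB]]].
  apply: (Ext_isF E12).(fS) sB _; apply: (Ext_isF E12).(fI); first exact: E12.2.
  by rewrite -f12 in pA.
have F''F := Fmax _ GF'' FF''.
exists p; split => //; first by move=> A /Fcof /Fp.
apply: fix_of => // A pA; apply: Fp; apply: F''F.
exists setT, A.
split; [exact: FF.(fT)|done|by move=> n []].
Qed.

Local Open Scope ring_scope.

Section Prob.
Variable R : realType.
Implicit Types (mu : (tree -> R) -> R) (f g : tree -> R).

Lemma bnd_cst (a : R) : bnd (fun _ : tree => a).
Proof. by exists `|a|. Qed.

Lemma bnd_le f M : (forall x, `|f x| <= M) -> bnd f.
Proof. by move=> H; exists M. Qed.

Lemma prob0 mu : is_prob mu -> mu (fun _ => 0) = 0.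
Proof.
case=> _ lin _ _.
have := lin 1 (fun _ => 0) (fun _ => 0) (bnd_cst 0) (bnd_cst 0).
have -> : (fun x : tree => 1 * 0 + 0) = (fun _ => 0 : R) by apply/funext => x; rewrite mulr0 addr0.
rewrite mul1r => H; lra.
Qed.

Lemma probC mu (a : R) : is_prob mu -> mu (fun _ => a) = a.
Proof.
move=> mp; have := mp.
case=> _ lin _ m1.
have := lin a (fun _ => 1) (fun _ => 0) (bnd_cst 1) (bnd_cst 0).
have -> : (fun x : tree => a * 1 + 0) = (fun _ => a) by apply/funext => x; rewrite mulr1 addr0.
by rewrite m1 prob0 // mulr1 addr0.
Qed.

Lemma probD mu f g : is_prob mu -> bnd f -> bnd g ->
  mu (fun x => f x + g x) = mu f + mu g.
Proof.
case=> _ lin _ _ bf bg; have := lin 1 f g bf bg.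
have -> : (fun x => 1 * f x + g x) = (fun x => f x + g x) by apply/funext => x; rewrite mul1r.
by rewrite mul1r.
Qed.

Lemma probZ mu (a : R) f : is_prob mu -> bnd f -> mu (fun x => a * f x) = a * mu f.
Proof.
move=> mp bf; have := mp; case=> _ lin _ _; have := lin a f (fun _ => 0) bf (bnd_cst 0).
have -> : (fun x => a * f x + 0) = (fun x => a * f x) by apply/funext => x; rewrite addr0.
by rewrite prob0 // addr0.
Qed.

Lemma prob_ge0 mu f : is_prob mu -> (forall x, 0 <= f x) -> 0 <= mu f.
Proof.
case=> unb _ pos _ H; case: (pselect (bnd f)) => bf; first exact: pos.
by rewrite unb.
Qed.

Lemma prob_bound mu f M : is_prob mu -> (forall x, `|f x| <= M) -> `|mu f| <= M.
Proof.
move=> mp H; have bf := bnd_le H.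
have H' x : - M <= f x <= M by rewrite -ler_norml.
have bf1 (a : R) : bnd (fun x => a * f x).
  by apply: (bnd_le (M := `|a| * M)) => x; rewrite normrM ler_wpM2l.
have h1 : 0 <= mu (fun x => (-1) * f x + M).
  by apply: prob_ge0 => // x; have /andP[] := H' x; lra.
have h2 : 0 <= mu (fun x => f x + M).
  by apply: prob_ge0 => // x; have /andP[] := H' x; lra.
rewrite probD ?probZ ?probC // in h1; try exact: bnd_cst.
rewrite probD ?probC // in h2; try exact: bnd_cst.
rewrite ler_norml; apply/andP; split; lra.
Qed.


Section Eval.
Variable mu : (tree -> R) -> R.

Fixpoint E (t : tree) (us : seq tree) (f : tree -> R) : R :=
  match t with
  | Leaf => if us is u :: _ then f u else mu f
  | Node a b => E a (take (leaves a) us)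
                  (fun x => E b (drop (leaves a) us) (fun y => f (Node x y)))
  end.

Lemma leaves_gt0 t : (0 < leaves t)%N.
Proof. by elim: t => //= a IHa b _; rewrite addn_gt0 IHa. Qed.

Lemma E_full t us f : size us = leaves t -> E t us f = f (subst t us).
Proof.
elim: t us f => [|a IHa b IHb] us f /=.
  by case: us => [|u [|? ?]].
move=> Hs; rewrite IHa; last by rewrite size_takel // Hs leq_addr.
by rewrite IHb // size_drop Hs addKn.
Qed.

Lemma E_bound t us f M : is_prob mu -> (forall x, `|f x| <= M) -> `|E t us f| <= M.
Proof.
move=> mp; elim: t us f => [|a IHa b IHb] us f H /=.
  by case: us => [|u ?]; [exact: prob_bound|exact: H].
by apply: IHa => x; apply: IHb.
Qed.


Lemma E_key t us f : (size us < leaves t)%N ->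
  E t us f = mu (fun v => E t (rcons us v) f).
Proof.
elim: t us f => [|a IHa b IHb] us f /=.
  by case: us.
move=> Hs; case: (ltnP (size us) (leaves a)) => Ha.
  transitivity (mu (fun v => E a (rcons us v) (fun x => E b [::] (fun y => f (Node x y))))).
    rewrite take_oversize ?drop_oversize; try exact: ltnW.
    exact: IHa.
  congr (mu _); apply/funext => v.
  by rewrite take_oversize ?drop_oversize // size_rcons.
rewrite E_full; last by rewrite size_takel.
rewrite IHb; last by rewrite size_drop -(ltn_add2l (leaves a)) subnKC.
congr (mu _); apply/funext => v.
rewrite -[rcons us v]cats1 takel_cat // cats1 drop_rcons // (@E_full a) //.
by rewrite size_takel.
Qed.

Hypothesis mp : is_prob mu.
Hypothesis idem : bconv Node mu mu = mu.

Lemma E_idem t f : bnd f -> E t [::] f = mu f.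
Proof.
elim: t f => [|a IHa b IHb] f bf //=.

have -> : (fun x => E b [::] (fun y => f (Node x y))) = (fun x => mu (fun y => f (Node x y))).
  apply/funext => x; apply: IHb; case: bf => M HM; by exists M.
rewrite IHa; last first.
  case: bf => M HM; exists M => x; apply: prob_bound => //.
transitivity (bconv Node mu mu f); last by rewrite idem.
by rewrite /bconv; case: asboolP.
Qed.

Lemma leaves_tk t k : (k < leaves t)%N -> (k < leaves (tk t k))%N.
Proof.
elim: t k => [|a IHa b IHb] k //= Hk.
case: ifP => Ha /=; first by have := IHa _ Ha; lia.
have Hb : (k - leaves a < leaves b)%N by lia.
have := IHb _ Hb; lia.
Qed.

Lemma E_tk t k us f : bnd f -> size us = k.+1 -> (k < leaves t)%N ->
  E t us f = E (tk t k) us f.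
Proof.
elim: t k us f => [|a IHa b IHb] k us f bf Hs Hk //=.
case: ifP => Ha /=.
- have Hk' := leaves_tk Ha.
  rewrite !take_oversize ?drop_oversize; try (rewrite Hs; lia).
  rewrite /= -IHa //; last first.
    case: bf => M HM; exists M => x; apply: prob_bound => //.
  congr (E a us _); apply/funext => x; apply: E_idem.
  by case: bf => M HM; exists M.
- congr (E a _ _); apply/funext => x; apply: IHb => //.
  + by case: bf => M HM; exists M.
  + rewrite size_drop Hs; lia.
  + simpl in Hk; lia.
Qed.

End Eval.
End Prob.

Fixpoint inL (T : Type) (x : T) (s : seq T) : Prop :=
  if s is y :: s' then y = x \/ inL x s' else False.

Section Cset.
Variable R : realType.
Implicit Types (f g : tree -> R).
Notation PT := (prod_topology (fun _ : tree -> R => (R : topologicalType))).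

Definition Mb (f : tree -> R) : R := xget 0 [set M : R | forall x, `|f x| <= M].
Definition K : set ((tree -> R) -> R) :=
  [set y | forall f, `[- Mb f, Mb f]%classic (y f)].

Lemma K_compact : wcompact K.
Proof.
have := @tychonoff (tree -> R : eqType) (fun _ => (R : topologicalType))
  (fun f => `[- Mb f, Mb f]%classic).
by move=> /(_ (fun f => @segment_compact R _ _)).
Qed.

Lemma prob_K y : is_prob y -> K y.
Proof.
move=> yp f; have yp' := yp; case: yp' => unb _ _ _.
case: (pselect (bnd f)) => bf.
  have HM : forall x, `|f x| <= Mb f := xgetPex 0 bf.
  have := prob_bound yp HM; rewrite ler_norml => /andP[h1 h2].
  by rewrite /= in_itv /= h1 h2.
rewrite unb //= /Mb xgetPN; first by rewrite in_itv /= oppr0 lexx.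
by move=> M HM; apply: bf; exists M.
Qed.

Lemma nb (y : (tree -> R) -> R) g (d : R) : 0 < d ->
  @nbhs _ PT y [set y' | `|y' g - y g| < d].
Proof.
move=> d0.
have := @proj_continuous (tree -> R : eqType) (fun _ => (R : topologicalType)) g y.
move=> /(_ (ball (y g) d) (nbhsx_ballx _ _ d0)) H.
have -> : [set y' : (tree -> R) -> R | `|y' g - y g| < d] = (proj g) @^-1` (ball (y g) d).
  apply/funext => y' /=; rewrite -ball_normE /ball_ /= distrC //.
exact: H.
Qed.

Lemma nbG (y : (tree -> R) -> R) (G : seq (tree -> R)) (d : R) : 0 < d ->
  @nbhs _ PT y [set y' | forall g, inL g G -> `|y' g - y g| < d].
Proof.
move=> d0; elim: G => [|g G IH].
  have -> : [set y' : (tree -> R) -> R | forall g, inL g [::] -> `|y' g - y g| < d] = setT.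
    by apply/funext => y'; apply/propext; split => // _ g0 [].
  have HF : Filter (@nbhs _ PT y) by exact: nbhs_pfilter.
  exact: filterT.
have -> : [set y' : (tree -> R) -> R | forall g0, inL g0 (g :: G) -> `|y' g0 - y g0| < d] =
   [set y' | `|y' g - y g| < d] `&` [set y' | forall g, inL g G -> `|y' g - y g| < d].
  apply/funext => y'; apply/propext; split.
    by move=> H; split; [apply: H; left|move=> g0 Hg; apply: H; right].
  by move=> [H1 H2] g0 [<-|Hg] //; apply: H2.
have HF : Filter (@nbhs _ PT y) by exact: nbhs_pfilter.
apply: filterI; [exact: nb|exact: IH].
Qed.


Definition fm (rho : fmeas R) : (tree -> R) -> R :=
  fun f => if `[< bnd f >] then \sum_(x <- rho) x.2 * f x.1 else 0.

Lemma fm_bnd rho f : bnd f -> fm rho f = \sum_(x <- rho) x.2 * f x.1.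
Proof. by rewrite /fm; case: asboolP. Qed.

Lemma fm_unb rho f : ~ bnd f -> fm rho f = 0.
Proof. by rewrite /fm; case: asboolP. Qed.

Lemma bnd_lin (a : R) f g : bnd f -> bnd g -> bnd (fun x => a * f x + g x).
Proof.
move=> [M HM] [N HN]; exists (`|a| * M + N) => x.
apply: le_trans (ler_normD _ _) _; rewrite normrM; apply: lerD => //.
by apply: ler_wpM2l.
Qed.

Lemma wsum_bound (rho : fmeas R) (h : tree -> R) M :
  (forall x, x \in rho -> 0 <= x.2) -> \sum_(x <- rho) x.2 = 1 ->
  (forall x, x \in rho -> `|h x.1| <= M) ->
  `|\sum_(x <- rho) x.2 * h x.1| <= M.
Proof.
move=> w0 w1 hM.
apply: le_trans (ler_norm_sum _ _ _) _.
have -> : M = \sum_(x <- rho) x.2 * M by rewrite -mulr_suml w1 mul1r.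
rewrite big_seq_cond [X in _ <= X]big_seq_cond; apply: ler_sum => x /andP[xr _].
by rewrite normrM ger0_norm ?w0 //; apply: ler_wpM2l; [exact: w0|exact: hM].
Qed.

Lemma fm_prob n rho : inA n rho -> is_prob (fm rho).
Proof.
case=> _ w0 w1; split.
- exact: fm_unb.
- move=> a f g bf bg; rewrite !fm_bnd //; last exact: bnd_lin.
  rewrite mulr_sumr -big_split /=; apply: eq_bigr => x _; lra.
- move=> f bf fpos; rewrite fm_bnd //; rewrite big_seq; apply: sumr_ge0 => x xr.
  by apply: mulr_ge0; [exact: w0|exact: fpos].
- rewrite fm_bnd; last exact: bnd_cst.
  transitivity (\sum_(x <- rho) x.2); last exact: w1.
  by apply: eq_bigr => x _; rewrite mulr1.
Qed.

Lemma small0 (x K0 : R) : 0 <= K0 -> (forall d, 0 < d -> `|x| < K0 * d + d) -> x = 0.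
Proof.
move=> K0p H; apply/eqP; apply: contraT => xn0.
have xp : 0 < `|x| by rewrite normr_gt0.
have := H (`|x| / (K0 + 1)) (divr_gt0 xp (ltr_wpDl K0p ltr01)).
have -> : K0 * (`|x| / (K0 + 1)) + `|x| / (K0 + 1) = `|x|.
  rewrite -[X in _ + X]mul1r -mulrDl mulrC divfK //.
  by rewrite gt_eqF // ltr_wpDl.
by rewrite ltxx.
Qed.

Lemma nonneg_lim (x : R) : (forall d, 0 < d -> - d < x) -> 0 <= x.
Proof.
move=> H; rewrite leNgt; apply/negP => x0.
have := H (- x); rewrite oppr_gt0 opprK ltxx => /(_ x0).
by [].
Qed.


Variable p : set_system nat.
Hypothesis pU : isU p.
Hypothesis pcof : forall A, cofin A -> p A.
Hypothesis pidem : psum p p = p.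

Definition appr (y : (tree -> R) -> R) (G : seq (tree -> R)) (d : R) : set nat :=
  [set n | exists rho, inA n rho /\ forall g, inL g G -> `|fm rho g - y g| < d].

Definition Cp : set ((tree -> R) -> R) :=
  [set y | forall G d, 0 < d -> p (appr y G d)].

Lemma p_ex X : p X -> exists n, X n.
Proof.
move=> pX; apply: contrapT => nX; apply: pU.1.(f0).
have -> : set0 = X by apply/funext => n; apply/propext; split => // Xn; apply: nX; exists n.
exact: pX.
Qed.

Lemma appr_ex y G d : Cp y -> 0 < d ->
  exists n rho, inA n rho /\ forall g, inL g G -> `|fm rho g - y g| < d.
Proof. by move=> Cy d0; have [n [rho H]] := p_ex (Cy G d d0); exists n, rho. Qed.

Lemma Cp_prob y : Cp y -> is_prob y.
Proof.
move=> Cy; split.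
- move=> f bf; apply: (@small0 _ 0) => // d d0.
  have [n [rho [_ H]]] := appr_ex [:: f] Cy d0.
  by have := H f (or_introl erefl); rewrite fm_unb // sub0r normrN mul0r add0r.
- move=> a f g bf bg; set h := fun x => a * f x + g x.
  apply/eqP; rewrite -subr_eq0; apply/eqP.
  apply: (@small0 _ (`|a| + 1)) => [|d d0]; first by rewrite addr_ge0.
  have [n [rho [Hr H]]] := appr_ex [:: h; f; g] Cy d0.
  have H1 := H h (or_introl erefl).
  have H2 := H f (or_intror (or_introl erefl)).
  have H3 := H g (or_intror (or_intror (or_introl erefl))).
  have lin : fm rho h = a * fm rho f + fm rho g by case: (fm_prob Hr) => _ L _ _; apply: L.
  have -> : y h - (a * y f + y g) =
     - (fm rho h - y h) + a * (fm rho f - y f) + (fm rho g - y g).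
    rewrite lin; set u := fm rho f; set v := fm rho g.
    rewrite mulrBr; lra.
  apply: le_lt_trans (ler_normD _ _) _.
  have Ha : `|a * (fm rho f - y f)| <= `|a| * d.
    by rewrite normrM; apply: ler_wpM2l => //; apply: ltW.
  have : `|- (fm rho h - y h) + a * (fm rho f - y f)| < d + `|a| * d.
    apply: le_lt_trans (ler_normD _ _) _; rewrite normrN.
    by apply: ltr_leD.
  move: Ha H1 H3; set X1 := `|_ + _|; set X2 := `|fm rho g - y g|.
  move=> _ _ H3 HX1; rewrite mulrDl mul1r; lra.
- move=> f bf fpos; apply: nonneg_lim => d d0.
  have [n [rho [Hr H]]] := appr_ex [:: f] Cy d0.
  have := H f (or_introl erefl); rewrite ltr_norml => /andP[_ h2].
  have : 0 <= fm rho f by case: (fm_prob Hr) => _ _ P _; apply: P.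
  lra.
- apply/eqP; rewrite -subr_eq0; apply/eqP.
  apply: (@small0 _ 0) => // d d0.
  have [n [rho [Hr H]]] := appr_ex [:: fun=> 1] Cy d0.
  have := H _ (or_introl erefl).
  have -> : fm rho (fun=> 1) = 1 by case: (fm_prob Hr).
  by rewrite mul0r add0r distrC.
Qed.


Lemma pI A B : p A -> p B -> p (A `&` B).
Proof. exact: pU.1.(fI). Qed.
Lemma pS A B : A `<=` B -> p A -> p B.
Proof. exact: pU.1.(fS). Qed.

Definition mixm (t : R) (rho sig : fmeas R) : fmeas R :=
  [seq (x.1, t * x.2) | x <- rho] ++ [seq (x.1, (1 - t) * x.2) | x <- sig].

Lemma mixm_inA n t rho sig : 0 <= t <= 1 -> inA n rho -> inA n sig ->
  inA n (mixm t rho sig).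
Proof.
move=> /andP[t0 t1] [l1 w1 s1] [l2 w2 s2]; split.
- move=> x; rewrite mem_cat => /orP[] /mapP [y yin ->] /=; [exact: l1|exact: l2].
- move=> x; rewrite mem_cat => /orP[] /mapP [y yin ->] /=; apply: mulr_ge0 => //.
  + exact: w1.
  + lra.
  + exact: w2.
- rewrite big_cat !big_map /= -!mulr_sumr s1 s2; lra.
Qed.

Lemma fm_mixm t rho sig f : fm (mixm t rho sig) f = t * fm rho f + (1 - t) * fm sig f.
Proof.
rewrite /fm; case: asboolP => _; last by rewrite !mulr0 addr0.
rewrite big_cat !big_map /= !mulr_sumr; congr (_ + _); apply: eq_bigr => x _; by rewrite mulrA.
Qed.

Lemma Cp_convex : wconvex Cp.
Proof.
move=> y z t Cy Cz /andP[t0 t1] G d d0.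
have d20 : 0 < d / 2 by rewrite divr_gt0.
apply: pS (pI (Cy G _ d20) (Cz G _ d20)) => n [[rho [Hr Hy]] [sig [Hs Hz]]].
exists (mixm t rho sig); split; first by apply: mixm_inA => //; rewrite t0 t1.
move=> g Hg; rewrite fm_mixm.
have -> : t * fm rho g + (1 - t) * fm sig g - (t * y g + (1 - t) * z g) =
   t * (fm rho g - y g) + (1 - t) * (fm sig g - z g) by ring.
apply: le_lt_trans (ler_normD _ _) _; rewrite !normrM (ger0_norm t0) (@ger0_norm _ (1 - t)); last lra.
have h1 := Hy g Hg; have h2 := Hz g Hg.
have e1 : t * `|fm rho g - y g| <= t * (d / 2) by apply: ler_wpM2l => //; apply: ltW.
have e2 : (1 - t) * `|fm sig g - z g| <= (1 - t) * (d / 2).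
  by apply: ler_wpM2l; [lra|apply: ltW].
have e3 : t * (d / 2) + (1 - t) * (d / 2) = d / 2 by ring.
have := splitr d; lra.
Qed.


Lemma inL_cat T (a : T) s1 s2 : inL a s1 \/ inL a s2 -> inL a (s1 ++ s2).
Proof.
elim: s1 => [|b s1 IH] /=; first by case.
by case=> [[->|H]|H]; [left|right; apply: IH; left|right; apply: IH; right].
Qed.

Lemma inL_mapL T U (f : T -> U) a s : inL a s -> inL (f a) (map f s).
Proof. elim: s => [|b s IH] //= [->|H]; [by left|by right; apply: IH]. Qed.

Lemma inL_map (T : eqType) U (f : T -> U) a s : a \in s -> inL (f a) (map f s).
Proof.
elim: s => [|b s IH] //=; rewrite inE => /orP[/eqP->|H]; [by left|by right; apply: IH].
Qed.

Lemma inL_flatten T (a : T) (s : seq T) ss : inL s ss -> inL a s -> inL a (flatten ss).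
Proof.
elim: ss => [|s' ss IH] //= [->|H] Ha; apply: inL_cat; [by left|by right; apply: IH].
Qed.

Definition prodm (rho sig : fmeas R) : fmeas R :=
  [seq (Node x.1 y.1, x.2 * y.2) | x <- rho, y <- sig].

Lemma prodm_inA n m rho sig : inA n rho -> inA m sig -> inA (n + m) (prodm rho sig).
Proof.
move=> [l1 w1 s1] [l2 w2 s2]; split.
- move=> x /allpairsP [[a b] [ain bin ->]] /=; by rewrite l1 // l2.
- move=> x /allpairsP [[a b] [ain bin ->]] /=; apply: mulr_ge0; [exact: w1|exact: w2].
- rewrite big_allpairs_dep /= -s1.
  by apply: eq_bigr => a _; rewrite -mulr_sumr s2 mulr1.
Qed.

Lemma fm_prodm rho sig g : bnd g ->
  fm (prodm rho sig) g = \sum_(x <- rho) x.2 * fm sig (fun v => g (Node x.1 v)).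
Proof.
move=> [M HM]; rewrite fm_bnd; last by exists M.
rewrite big_allpairs_dep /=.
apply: eq_bigr => a _; rewrite fm_bnd; last by exists M.
by rewrite mulr_sumr; apply: eq_bigr => b _; rewrite mulrA.
Qed.

Definition Gr (rho : fmeas R) (G : seq (tree -> R)) : seq (tree -> R) :=
  flatten [seq [seq (fun v => g (Node x.1 v)) | x <- rho] | g <- G].

Lemma Cp_bconv y z : Cp y -> Cp z -> Cp (bconv Node y z).
Proof.
move=> Cy Cz G d d0.
have zp := Cp_prob Cz.
have d20 : 0 < d / 2 by rewrite divr_gt0.
pose Hl := [seq (fun x => z (fun v => g (Node x v))) | g <- G].
rewrite -pidem; apply: pS (Cy Hl _ d20) => n [rho [Hr Hrho]].
apply: pS (Cz (Gr rho G) _ d20) => m [sig [Hs Hsig]].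
exists (prodm rho sig); split; first exact: prodm_inA.
move=> g Hg; case: (pselect (bnd g)) => bg; last first.
  by rewrite fm_unb // /bconv; case: asboolP => // _; rewrite subrr normr0.
have bgx : forall x, bnd (fun v => g (Node x v)).
  by case: bg => M HM x; exists M.
have bh : bnd (fun x => z (fun v => g (Node x v))).
  by case: bg => M HM; exists M => x; apply: prob_bound.
rewrite fm_prodm // /bconv; case: asboolP => // _.
have := Hrho _ (inL_mapL (fun g => fun x => z (fun v => g (Node x v))) Hg).
rewrite fm_bnd //= => H1.
have H2 : `|\sum_(x <- rho) x.2 * (fm sig (fun v => g (Node x.1 v)) - z (fun v => g (Node x.1 v)))| <= d / 2.
  case: Hr => _ w1 s1; apply: (wsum_bound (h := fun u => fm sig (fun v => g (Node u v)) - z (fun v => g (Node u v)))) => // x xin.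
  apply: ltW; apply: Hsig; rewrite /Gr.
  apply: (inL_flatten (s := [seq (fun v => g (Node x.1 v)) | x <- rho])).
    exact: (inL_mapL (fun g => [seq (fun v => g (Node x.1 v)) | x <- rho]) Hg).
  exact: (inL_map (fun x => fun v => g (Node x.1 v)) xin).
have -> : \sum_(x <- rho) x.2 * fm sig (fun v => g (Node x.1 v)) -
     y (fun x => z (fun v => g (Node x v))) =
   \sum_(x <- rho) x.2 * (fm sig (fun v => g (Node x.1 v)) - z (fun v => g (Node x.1 v))) +
   (\sum_(x <- rho) x.2 * z (fun v => g (Node x.1 v)) - y (fun x => z (fun v => g (Node x v)))).
  rewrite addrA; congr (_ - _); rewrite -big_split /=; apply: eq_bigr => x _; ring.
apply: le_lt_trans (ler_normD _ _) _.
have := splitr d; lra.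
Qed.


Lemma Cp_closed : @closed PT Cp.
Proof.
move=> y Hy G d d0.
have d20 : 0 < d / 2 by rewrite divr_gt0.
have [y' [Cy' By']] := Hy _ (nbG y G d20).
apply: pS (Cy' G _ d20) => n [rho [Hr H]]; exists rho; split => // g Hg.
have := H g Hg; have := By' g Hg.
have -> : fm rho g - y g = (fm rho g - y' g) + (y' g - y g) by ring.
move=> h1 h2; apply: le_lt_trans (ler_normD _ _) _.
have := splitr d; lra.
Qed.

Lemma Cp_compact : wcompact Cp.
Proof.
apply: (@subclosed_compact PT Cp K Cp_closed K_compact).
by move=> y /Cp_prob /prob_K.
Qed.

Fixpoint cm (n : nat) : tree := if n is n'.+1 then Node Leaf (cm n') else Leaf.
Lemma leaves_cm n : leaves (cm n) = n.+1.
Proof. by elim: n => //= n ->; rewrite add1n. Qed.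

Definition rhon (n : nat) : fmeas R := [:: (cm n.-1, 1)].
Lemma rhon_inA n : (0 < n)%N -> inA n (rhon n).
Proof.
move=> n0; split.
- by move=> x; rewrite inE => /eqP -> /=; rewrite leaves_cm prednK.
- by move=> x; rewrite inE => /eqP -> /=.
- by rewrite big_seq1.
Qed.

Lemma Cp_nonempty : Cp !=set0.
Proof.
pose F : set_system ((tree -> R) -> R) := [set B | p [set n | B (fm (rhon n))]].
have FF : ProperFilter F.
  apply: Build_ProperFilter.
    by move=> /p_ex [].
  split.
  - by apply: pS pU.1.(fT).
  - by move=> A B FA FB; apply: pS (pI FA FB) => n.
  - by move=> A B AB FA; apply: pS FA => n /AB.
have FK : F K.
  apply: pS (pcof (A := [set n | (0 < n)%N]) _).
    by move=> n /= n0; apply: prob_K; apply: fm_prob (rhon_inA n0).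
  by exists 1%N.
have [y [Ky cy]] := K_compact FF FK.
exists y => G d d0.
pose Q := [set n | forall g, inL g G -> `|fm (rhon n) g - y g| < d].
have pQ : p Q.
  case: (pU.2 Q) => // pnQ.
  have FnU : F [set z | ~ (forall g, inL g G -> `|z g - y g| < d)] by [].
  have [z [nz Uz]] := cy _ _ FnU (nbG y G d0).
  by exfalso; apply: nz.
apply: pS (pI pQ (pcof (A := [set n | (0 < n)%N]) _)); last by exists 1%N.
by move=> n [Qn n0]; exists (rhon n); split; [exact: rhon_inA|exact: Qn].
Qed.

End Cset.

Fixpoint trees (n : nat) : seq tree :=
  if n is n'.+1 then Leaf :: [seq Node a b | a <- trees n', b <- trees n'] else [:: Leaf].

Lemma mem_trees t n : (leaves t <= n.+1)%N -> t \in trees n.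
Proof.
elim: t n => [|a IHa b IHb] n /=; first by case: n => [|n] /=; rewrite inE eqxx.
have la := leaves_gt0 a; have lb := leaves_gt0 b.
case: n => [|n] H; first by lia.
rewrite inE; apply/orP; right; apply: allpairs_f; [apply: IHa|apply: IHb]; lia.
Qed.

Fixpoint lists (S : seq tree) (n : nat) : seq (seq tree) :=
  if n is n'.+1 then [::] :: [seq x :: l | x <- S, l <- lists S n'] else [:: [::]].

Lemma mem_lists S us n : (size us <= n)%N -> (forall u, u \in us -> u \in S) ->
  us \in lists S n.
Proof.
elim: us n => [|u us IH] n /=; first by case: n => [|n]; rewrite inE eqxx.
case: n => [|n] // Hs HS; rewrite inE; apply/orP; right.
apply: allpairs_f; first by apply: HS; rewrite inE eqxx.
by apply: IH => // v vin; apply: HS; rewrite inE vin orbT.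
Qed.

Section Final.
Variable R : realType.

Fixpoint supp (h : seq (nat * fmeas R)) : seq tree :=
  if h is e :: h' then map fst e.2 ++ supp h' else [::].

Lemma supp_cat h1 h2 : supp (h1 ++ h2) = supp h1 ++ supp h2.
Proof. by elim: h1 => //= e h1 ->; rewrite catA. Qed.

Lemma sumn_ge (s : seq nat) x : x \in s -> (x <= sumn s)%N.
Proof.
elim: s => //= y s IH; rewrite inE => /orP[/eqP->|/IH]; first exact: leq_addr.
by move=> H; apply: leq_trans H (leq_addl _ _).
Qed.

Lemma Psi_geo (x : R) (ix : seq nat) a : 0 < x -> x + x = 1 -> sorted ltn ix ->
  (forall i, i \in ix -> (a <= i)%N) -> \sum_(i <- ix) x ^+ i.+1 < x ^+ a.
Proof.
move=> x0 x2; elim: ix a => [|i ix IH] a /=; first by rewrite big_nil exprn_gt0.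
move=> Hs Ha; rewrite big_cons.
have ai : (a <= i)%N by apply: Ha; rewrite inE eqxx.
have H1 : \sum_(j <- ix) x ^+ j.+1 < x ^+ i.+1.
  apply: IH; first exact: (path_sorted Hs).
  move=> j jin; have := order_path_min ltn_trans Hs.
  by move=> /allP /(_ j jin).
have H2 : x ^+ i.+1 + x ^+ i.+1 = x ^+ i by rewrite exprS -mulrDl x2 mul1r.
have H3 : x ^+ i <= x ^+ a.
  by apply: ler_wiXn2l => //; [exact: ltW|lra].
lra.
Qed.


Section Est.
Variable mu : (tree -> R) -> R.
Hypothesis mp : is_prob mu.
Hypothesis idem : bconv Node mu mu = mu.
Variable c : tree -> R.
Hypothesis c01 : forall t, 0 <= c t <= 1.
Variable mus : nat -> fmeas R.
Variable sz : nat -> nat.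
Variable S : nat -> seq tree.
Variable dl : nat -> R.
Hypothesis Hin : forall i, inA (sz i) (mus i).
Hypothesis HS : forall i j x, (i < j)%N -> x \in mus i -> x.1 \in S j.
Hypothesis HG : forall i s us, s \in trees i.+1 -> us \in lists (S i) i ->
  `|fm (mus i) (fun v => E mu s (rcons us v) c) - mu (fun v => E mu s (rcons us v) c)| < dl i.

Lemma c_bound x : `|c x| <= 1.
Proof. by have /andP[h1 h2] := c01 x; rewrite ler_norml h2 andbT; lra. Qed.

Lemma c_bnd : bnd c.
Proof. by exists 1; exact: c_bound. Qed.

Fixpoint Psi (t : tree) (us : seq tree) (ls : seq (fmeas R)) : R :=
  if ls is nu :: ls' then \sum_(x <- nu) x.2 * Psi t (rcons us x.1) ls'
  else E mu t us c.

Lemma Psi_bound t ix us : sorted ltn ix -> (size us + size ix)%N = leaves t ->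
  (forall j, (j < size ix)%N -> lk t (size us + j) <= (nth 0%N ix j)%:Z) ->
  (forall i, i \in ix -> (size us <= i)%N /\ forall u, u \in us -> u \in S i) ->
  `|Psi t us (map mus ix) - E mu t us c| <= \sum_(i <- ix) dl i.
Proof.
elim: ix us => [|i ix IH] us /=.
  by move=> _ _ _ _; rewrite subrr normr0 big_nil.
move=> Hs Hsz Hlk Hmem; rewrite big_cons.
have kt : (size us < leaves t)%N by rewrite -Hsz addnS ltnS leq_addr.
set g := fun v => E mu t (rcons us v) c.
have Eg : E mu t us c = mu g by apply: E_key.
have gk : g = fun v => E mu (tk t (size us)) (rcons us v) c.
  apply/funext => v; apply: E_tk => //; first exact: c_bnd.
  by rewrite size_rcons.
have [ki Hui] := Hmem i (mem_head _ _).
have Htk : tk t (size us) \in trees i.+1.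
  apply: mem_trees; have := Hlk 0%N isT; rewrite addn0 /lk /=; lia.
have Hus : us \in lists (S i) i by apply: mem_lists.
have HGi := HG Htk Hus; rewrite -gk in HGi.
have bg : bnd g by exists 1 => v; apply: E_bound => //; exact: c_bound.
have [_ w0 w1] := Hin i.
rewrite Eg.
have -> : \sum_(x <- mus i) x.2 * Psi t (rcons us x.1) (map mus ix) - mu g =
    \sum_(x <- mus i) x.2 * (Psi t (rcons us x.1) (map mus ix) - g x.1) +
    (fm (mus i) g - mu g).
  rewrite fm_bnd // addrA; congr (_ - _); rewrite -big_split /=.
  by apply: eq_bigr => x _; ring.
apply: le_trans (ler_normD _ _) _; rewrite [dl i + _]addrC; apply: lerD; last exact: ltW.
apply: (wsum_bound (h := fun u => Psi t (rcons us u) (map mus ix) - g u)) => // x xin.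
apply: IH.
- exact: (path_sorted Hs).
- by rewrite size_rcons addSnnS.
- move=> j Hj; rewrite size_rcons addSnnS; exact: (Hlk j.+1).
- move=> i' i'in.
  have ii' : (i < i')%N.
    by have := order_path_min ltn_trans Hs => /allP /(_ i' i'in).
  have [ki' Hui'] := Hmem i' (@mem_behead _ (i :: ix) _ i'in).
  split; first by rewrite size_rcons; apply: leq_ltn_trans ki ii'.
  move=> u; rewrite mem_rcons inE => /orP[/eqP->|uin]; last exact: Hui'.
  exact: HS xin.
Qed.


Lemma Psi_choices t us ls :
  Psi t us ls = \sum_(q <- choices ls) q.2 * E mu t (us ++ q.1) c.
Proof.
elim: ls us => [|nu ls IH] us /=; first by rewrite big_seq1 mul1r cats0.
rewrite big_allpairs_dep /=; apply: eq_bigr => x _.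
rewrite IH mulr_sumr; apply: eq_bigr => q _; rewrite cat_rcons; ring.
Qed.

Lemma choices_size (ls : seq (fmeas R)) q : q \in choices ls -> size q.1 = size ls.
Proof.
elim: ls q => [|nu ls IH] q /=; first by rewrite inE => /eqP ->.
by move=> /allpairsPdep [x [q' [_ q'in ->]]] /=; rewrite IH.
Qed.

Lemma cA_Psi t ls : size ls = leaves t -> cA c (tsubst t ls) = Psi t [::] ls.
Proof.
move=> Hs; rewrite Psi_choices /cA /tsubst big_map big_seq [RHS]big_seq.
apply: eq_bigr => q qin /=; rewrite E_full //; last by rewrite (choices_size qin) Hs.
Qed.

End Est.
End Final.

Lemma supp_mem (R : realType) (h : seq (nat * fmeas R)) e x :
  e \in h -> x \in e.2 -> x.1 \in supp h.
Proof.
elim: h => //= e' h IH; rewrite inE => /orP[/eqP->|eh] xe; rewrite mem_cat.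
  by rewrite (map_f fst xe).
by rewrite IH ?orbT.
Qed.

Unset Implicit Arguments.

Theorem theorem4p1 (R : realType) :
  (forall (S : Type) (op : S -> S -> S) (C : set ((S -> R) -> R)),
      C !=set0 -> wcompact C -> wconvex C -> C `<=` @is_prob R S ->
      (forall mu nu, C mu -> C nu -> C (bconv op mu nu)) ->
      exists2 mu, C mu & bconv op mu mu = mu) ->
  forall (c : tree -> R), (forall t, 0 <= c t <= 1) ->
  forall eps : R, 0 < eps ->
  exists r : R, 0 <= r <= 1 /\
    exists (mu : nat -> fmeas R) (sz : nat -> nat),
      [/\ (forall i, inA (sz i) (mu i)),
          (forall i j, (i < j)%N -> (sz i < sz j)%N)
        & forall (t : tree) (ix : seq nat), admissible t ix ->
            `| cA c (tsubst t (map mu ix)) - r | < eps].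
Proof.
move=> Hyp c c01 eps eps0.
have [p [pU pcof pidem]] := exists_idem.
have [mu Cmu idem] := Hyp tree Node (Cp p)
  (Cp_nonempty R pU pcof) (Cp_compact pU) (Cp_convex pU) (Cp_prob pU) (Cp_bconv pU pidem).
have mp := Cp_prob pU Cmu.
have cb := c_bnd c01.
exists (mu c); split.
  have := prob_bound (f := c) (M := 1) mp (c_bound c01); rewrite ler_norml => /andP[_ ->].
  by rewrite prob_ge0 // => x; have /andP[] := c01 x.
pose x2 : R := 2^-1.
have x20 : 0 < x2 by rewrite invr_gt0.
have x22 : x2 + x2 = 1 by rewrite [RHS]splitr mul1r.
pose dl (i : nat) := eps * x2 ^+ i.+1.
pose Gs (h : seq (nat * fmeas R)) : seq (tree -> R) :=
  flatten [seq [seq (fun v => E mu s (rcons us v) c) | us <- lists (supp h) (size h)]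
          | s <- trees (size h).+1].
have step : forall h : seq (nat * fmeas R), exists e : nat * fmeas R,
    [/\ (sumn (map fst h) < e.1)%N, inA e.1 e.2 &
        forall g, inL g (Gs h) -> `|fm e.2 g - mu g| < dl (size h)].
  move=> h.
  have d0 : 0 < dl (size h) by rewrite mulr_gt0 // exprn_gt0.
  have := pI pU (Cmu (Gs h) _ d0) (pcof [set n | (sumn (map fst h) < n)%N] _).
  move=> /(_ (ex_intro _ (sumn (map fst h)).+1 (fun n Hn => Hn))).
  move=> /(p_ex pU) [n [[rho [Hr Hap]] Hn]].
  by exists (n, rho); split.
have [f Hf] := choice step.
pose hist k := iter k (fun h => rcons h (f h)) [::].
have size_hist k : size (hist k) = k by elim: k => //= k; rewrite size_rcons => ->.
have hist_pre i l : exists rest, hist (i + l)%N = hist i ++ rest.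
  elim: l => [|l [rest Hr]]; first by exists [::]; rewrite addn0 cats0.
  exists (rcons rest (f (hist (i + l)%N))); rewrite addnS /= -/(hist (i + l)%N) Hr.
  by rewrite rcons_cat.
have el_in i j : (i < j)%N -> f (hist i) \in hist j.
  move=> ij; have [rest Hr] := hist_pre i.+1 (j - i.+1)%N.
  rewrite subnKC // in Hr; rewrite Hr mem_cat /= -/(hist i) mem_rcons mem_head //.
pose mus i := (f (hist i)).2.
pose sz i := (f (hist i)).1.
exists mus, sz; split.
- by move=> i; case: (Hf (hist i)).
- move=> i j ij; case: (Hf (hist j)) => Hj _ _.
  apply: leq_ltn_trans Hj; apply: sumn_ge.
  by rewrite /sz; apply: map_f; exact: el_in.
- move=> t ix [Hsize Hsort Hlk].
  have HS : forall i j x, (i < j)%N -> x \in mus i -> x.1 \in supp (hist j).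
    by move=> i j x ij xin; apply: supp_mem xin; exact: el_in.
  have HG : forall i s us, s \in trees i.+1 -> us \in lists (supp (hist i)) i ->
      `|fm (mus i) (fun v => E mu s (rcons us v) c) - mu (fun v => E mu s (rcons us v) c)| < dl i.
    move=> i s us sin usin; case: (Hf (hist i)) => _ _ Hap.
    rewrite -{2}(size_hist i); apply: Hap; rewrite /Gs size_hist.
    apply: (inL_flatten (s := [seq (fun v => E mu s (rcons us v) c) | us <- lists (supp (hist i)) i])).
      exact: (inL_map (fun s => [seq (fun v => E mu s (rcons us v) c) | us <- lists (supp (hist i)) i]) sin).
    exact: (inL_map (fun us => fun v => E mu s (rcons us v) c) usin).
  have Hin : forall i, inA (sz i) (mus i) by move=> i; case: (Hf (hist i)).
  rewrite (cA_Psi mu c); last by rewrite size_map.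
  have Hb := @Psi_bound R mu mp idem c c01 mus sz (fun i => supp (hist i)) dl Hin HS HG t ix [::] Hsort Hsize
    (fun j Hj => Hlk j (leq_trans Hj (eq_leq Hsize)))
    (fun i _ => conj (leq0n i) (fun u (H : u \in [::]) => False_ind _ (notF H))).
  move: Hb; rewrite E_idem // => Hb; apply: le_lt_trans Hb _.
  rewrite /dl -mulr_sumr -[X in _ < X]mulr1 ltr_pM2l //.
  by rewrite -(expr0 x2); apply: Psi_geo.
Qed.
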